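(* Let $X$ be a vector space, let $0<\beta\le1$, and let $Y$ be a $\beta$-homogeneous complex Banach space with $F$-norm $\|\cdot\|$. Let $\varepsilon>0$ and let $\phi: X\to Y$ be a mapping with $\phi(0)=0$ and $$\big\|\phi(x+y-z)+\phi(x+z-y)+\phi(y+z-x)-\phi(x-y)-\phi(x-z)-\phi(z-y)-\phi(x)-\phi(y)-\phi(z)\big\|\le\varepsilon$$ for all $x,y,z\in X$. Then there exists a unique quadratic mapping $h: X\to Y$ such that $$\|\phi(x)-h(x)\|\le\frac{\varepsilon}{4^\beta-1}\quad\text{for all }x\in X.$$
   Context: An $F$-norm on a complex linear space $Y$ is a map $\|\cdot\|: Y\to[0,\infty)$ such that: $\|u\|=0$ iff $u=0$; $\|\lambda u\|=\|u\|$ whenever $|\lambda|=1$; $\|u+v\|\le\|u\|+\|v\|$; $\|\lambda_n u\|\to0$ implies $\lambda_n\to0$; $\|\lambda u_n\|\to 0$ implies $u_n\to0$. With $d(u,v)=\|u-v\|$, $Y$ is an $F$-space if $d$ is complete. The $F$-norm is $\beta$-homogeneous ($\beta>0$) if $\|\lambda u\|=|\lambda|^\beta\|u\|$ for all $u\in Y$, $\lambda\in\mathbb{C}$; a $\beta$-homogeneous Banach space is a $\beta$-homogeneous $F$-space. A mapping $h: X\to Y$ is quadratic if $h(x+y)+h(x-y)=2h(x)+2h(y)$ for all $x,y\in X$. *)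

(* Defs.v *)
From HB Require Import structures.
From mathcomp Require Import all_boot all_order all_algebra.
From mathcomp Require Import all_classical all_reals all_analysis.
From mathcomp Require Import complex.
Set Implicit Arguments. Unset Strict Implicit. Unset Printing Implicit Defensive.
Import Order.TTheory GRing.Theory Num.Theory numFieldNormedType.Exports.
Local Open Scope ring_scope.
Local Open Scope classical_set_scope.

Definition cmod (R : realType) (z : complex R) : R :=
  Num.sqrt (complex.Re z ^+ 2 + complex.Im z ^+ 2).

Definition is_Fnorm (R : realType) (Y : lmodType (complex R)) (nrm : Y -> R) : Prop :=
  [/\ (forall u, nrm u = 0 <-> u = 0),
      (forall (l : complex R) u, cmod l = 1 -> nrm (l *: u) = nrm u),
      (forall u v, nrm (u + v) <= nrm u + nrm v),
      (forall (l : nat -> complex R) u, u <> 0 ->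
          (fun n : nat => nrm (l n *: u)) @ \oo --> (0 : R) ->
          (fun n : nat => cmod (l n)) @ \oo --> (0 : R)) &
      (forall (l : complex R) (u : nat -> Y), l <> 0 ->
          (fun n : nat => nrm (l *: u n)) @ \oo --> (0 : R) ->
          (fun n : nat => nrm (u n)) @ \oo --> (0 : R))].

Definition Fcomplete (R : realType) (Y : lmodType (complex R)) (nrm : Y -> R) : Prop :=
  forall u : nat -> Y,
    (forall e : R, 0 < e -> exists N : nat, forall m n : nat,
        (N <= m)%N -> (N <= n)%N -> nrm (u m - u n) < e) ->
    exists v : Y, (fun n : nat => nrm (u n - v)) @ \oo --> (0 : R).

Definition beta_homogeneous (R : realType) (Y : lmodType (complex R))
  (nrm : Y -> R) (beta : R) : Prop :=
  forall (l : complex R) (u : Y), nrm (l *: u) = (cmod l) `^ beta * nrm u.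

Definition beta_homogeneous_Banach (R : realType) (Y : lmodType (complex R))
  (nrm : Y -> R) (beta : R) : Prop :=
  [/\ 0 < beta, is_Fnorm nrm, Fcomplete nrm & beta_homogeneous nrm beta].

Definition quadratic (X Y : zmodType) (h : X -> Y) : Prop :=
  forall x y : X, h (x + y) + h (x - y) = h x *+ 2 + h y *+ 2.

(* Main.v *)
Require Import Defs.
From HB Require Import structures.
From mathcomp Require Import all_boot all_order all_algebra.
From mathcomp Require Import all_classical all_reals all_analysis.
From mathcomp Require Import complex lra ring.
Import Order.TTheory GRing.Theory Num.Theory numFieldNormedType.Exports.
Local Open Scope ring_scope.
Local Open Scope classical_set_scope.
Set Implicit Arguments. Unset Strict Implicit.
Definition Qd (X Y : zmodType) (f : X -> Y) x y := f (x+y) + f (x-y) - f x *+ 2 - f y *+ 2.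

Lemma subACA (V : zmodType) (a b c d : V) : (a - b) - (c - d) = (a - c) - (b - d).
Proof. by rewrite !opprD addrACA. Qed.

Lemma Qd_sub (X Y : zmodType) (f g : X -> Y) x y :
  Qd (fun z => f z - g z) x y = Qd f x y - Qd g x y.
Proof.
rewrite /Qd !mulrnBl addrACA -opprD.
set S := f (x + y) + f (x - y); set T := g (x + y) + g (x - y).
by rewrite (subACA S T) (subACA (S - _)).
Qed.

Lemma Qd_quad (X Y : zmodType) (f : X -> Y) : quadratic f <-> forall x y, Qd f x y = 0.
Proof.
split=> H x y.
  by rewrite /Qd -addrA -opprD H subrr.
by apply/eqP; rewrite -subr_eq0 opprD addrA; apply/eqP; exact: H.
Qed.

Lemma E1id (X Y : zmodType) (phi : X -> Y) (x : X) : phi 0 = 0 ->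
  phi (x + 0 - x) + phi (x + x - 0) + phi (0 + x - x) - phi (x - 0) - phi (x - x)
  - phi (x - 0) - phi x - phi 0 - phi x = phi (x + x) - phi x *+ 4.
Proof.
move=> p0; rewrite addr0 add0r !subr0 subrr p0 add0r addr0 !subr0.
by rewrite !mulrS mulr0n addr0 !opprD !addrA.
Qed.

Lemma lin6 (V : zmodType) (A B C D F G : V) :
 A + B - D *+ 2 - G *+ 2 = (A + B + C - B - D - F - D - G) + (B + C + B - C - C - B) - (G + F + G - F - F - G).
Proof.
apply/eqP; rewrite -subr_eq0; apply/eqP.
rewrite !mulr2n !opprD !opprK !addrA.
rewrite (@GRing.add V).[ACl ((1*7)*(2*8)*(10*15)*(20*17)*(11*3)*(13*4)*(14*5)*(21*6)*(23*26)*(18*9)*(19*16)*(12*24)*(22*25))].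
by rewrite !subrr !addr0.
Qed.

Lemma EQid (X Y : zmodType) (phi : X -> Y) (x y : X) : phi 0 = 0 ->
  Qd phi x y =
  (phi (x + y - 0) + phi (x + 0 - y) + phi (y + 0 - x) - phi (x - y) - phi (x - 0)
    - phi (0 - y) - phi x - phi y - phi 0)
  + (phi (0 + (x - y) - 0) + phi (0 + 0 - (x - y)) + phi ((x - y) + 0 - 0) - phi (0 - (x - y)) - phi (0 - 0)
    - phi (0 - (x - y)) - phi 0 - phi (x - y) - phi 0)
  - (phi (0 + y - 0) + phi (0 + 0 - y) + phi (y + 0 - 0) - phi (0 - y) - phi (0 - 0)
    - phi (0 - y) - phi 0 - phi y - phi 0).
Proof.
move=> p0; rewrite /Qd !addr0 !add0r !subr0 oppr0 opprB p0 !subr0.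
exact: lin6.
Qed.
Lemma cmod_real (R : realType) (r : R) : 0 <= r -> cmod (r%:C)%C = r.
Proof. move=> r0. rewrite /cmod /= (_ : (0:R) ^+ 2 = 0); last by rewrite expr2 mulr0.
by rewrite addr0 sqrtr_sqr ger0_norm. Qed.
Lemma cmodN1 (R : realType) : cmod (-1 : complex R) = 1.
Proof. rewrite /cmod /= oppr0 (_ : (0:R) ^+ 2 = 0); last by rewrite expr2 mulr0.
by rewrite addr0 sqrtr_sqr normrN normr1. Qed.
Lemma c4 (R : realType) : ((4:R)^-1)%:C%C * 4%:R = 1 :> complex R.
Proof. by rewrite -(rmorph_nat (real_complex R)) -rmorphM mulVf // rmorph1. Qed.
Lemma lim_le (R : realType) (a : nat -> R) c b : a @ \oo --> 0 -> (forall n, c <= b + a n) -> c <= b.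
Proof.
move=> Ha Hc; apply/ler_addgt0Pr => e e0.
move/cvgrPdist_lt: Ha => /(_ e e0) [N _ HN].
have := HN N (leqnn N); rewrite sub0r normrN => H.
apply: le_trans (Hc N) _; rewrite lerD2l.
exact: le_trans (ler_norm _) (ltW H).
Qed.

Lemma cvg0D (R : realType) (u v : nat -> R) :
  u @ \oo --> (0:R) -> v @ \oo --> (0:R) -> (fun n : nat => u n + v n) @ \oo --> (0:R).
Proof. move=> hu hv; rewrite -[X in _ --> X](addr0 0); exact: cvgD. Qed.

Lemma cvg0geo (R : realType) (q c : R) : 0 <= q -> q < 1 ->
  (fun n : nat => q ^+ n * c) @ \oo --> (0:R).
Proof.
move=> q0 q1; rewrite -[X in _ --> X](mul0r c); apply: cvgMr_tmp.
by apply: cvg_expr; rewrite ger0_norm.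
Qed.

Fixpoint yseq (R : realType) (X : zmodType) (Y : lmodType (complex R)) (phi : X -> Y)
  (n : nat) (x : X) : Y :=
  if n is n'.+1 then ((4:R)^-1)%:C%C *: yseq phi n' (x + x) else phi x.

Lemma yseqS (R : realType) (X : zmodType) (Y : lmodType (complex R)) (phi : X -> Y) n x :
  yseq phi n.+1 x = ((4:R)^-1)%:C%C *: yseq phi n (x + x).
Proof. by []. Qed.

Lemma yseq0 (R : realType) (X : zmodType) (Y : lmodType (complex R)) (phi : X -> Y) :
  yseq phi 0 = phi.
Proof. by []. Qed.

Unset Implicit Arguments.
Theorem corollary4p2 (R : realType) (X : lmodType R)
  (Y : lmodType (complex R)) (nrm : Y -> R) (beta : R)
  (hbeta : 0 < beta <= 1) (hY : beta_homogeneous_Banach nrm beta)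
  (eps : R) (heps : 0 < eps) (phi : X -> Y) (phi0 : phi 0 = 0)
  (hphi : forall x y z : X,
     nrm (phi (x + y - z) + phi (x + z - y) + phi (y + z - x)
          - phi (x - y) - phi (x - z) - phi (z - y)
          - phi x - phi y - phi z) <= eps) :
  exists h : X -> Y,
    [/\ quadratic h,
        (forall x, nrm (phi x - h x) <= eps / (4 `^ beta - 1)) &
        (forall h' : X -> Y, quadratic h' ->
           (forall x, nrm (phi x - h' x) <= eps / (4 `^ beta - 1)) -> h' = h)].
Proof.
case: hY => b0 [nrm0 _ ntri _ _] hcomp hhom.
have nrm00 : nrm 0 = 0 by apply/nrm0.
have nrmN u : nrm (- u) = nrm u.
  by rewrite -scaleN1r hhom cmodN1 powR1 mul1r.
have nrm_ge0 u : 0 <= nrm u.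
  have := ntri u (- u); rewrite subrr nrm00 nrmN => H; lra.
have nrmB u v : nrm (u - v) = nrm (v - u) by rewrite -opprB nrmN.
have nrmD u v : nrm (u - v) <= nrm u + nrm v by rewrite -(nrmN v); apply: ntri.
have nrm2 u : nrm (u *+ 2) <= nrm u *+ 2 by rewrite !mulr2n; apply: ntri.
set P := 4 `^ beta.
have P1 : 1 < P.
  rewrite lt_neqAle; apply/andP; split.
    rewrite eq_sym /P powR_eq1 (gt_eqF b0) orbF; apply/negP => /orP [/eqP H|H]; lra.
  rewrite /P -[X in X <= _](powRr0 4); apply: ler_powR; lra.
set q := P^-1.
have q0 : 0 < q by rewrite invr_gt0; lra.
have q1 : q < 1 by rewrite invf_lt1 //; lra.
set c := ((4:R)^-1)%:C%C.
have hc u : nrm (c *: u) = q * nrm u.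
  rewrite hhom cmod_real ?invr_ge0 //; congr (_ * _).
  by rewrite /q /P -(@powR_inv1 R 4) // -powRrM mulN1r powRN.
have cq (u : Y) : c *: (u *+ 4) = u by rewrite -scaler_nat scalerA c4 scale1r.
have step n x : nrm (yseq phi n.+1 x - yseq phi n x) <= eps * q ^+ n.+1.
  elim: n x => [|n IH] x.
    rewrite yseqS yseq0 -(cq (phi x)) -scalerBr hc expr1 mulrC.
    apply: ler_wpM2r; first exact: ltW.
    by have := hphi x 0 x; rewrite E1id.
  rewrite [yseq _ n.+2 _]yseqS [yseq _ n.+1 x]yseqS -scalerBr hc exprS mulrCA.
  by apply: ler_wpM2l; [exact: ltW | exact: IH].
have cum k n x : nrm (yseq phi n x - yseq phi (n + k) x)
    <= eps * q ^+ n * (q * (1 - q ^+ k) / (1 - q)).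
  elim: k => [|k IH].
    by rewrite addn0 subrr nrm00 expr0 subrr mulr0 mul0r mulr0.
  rewrite addnS.
  have -> : yseq phi n x - yseq phi (n + k).+1 x =
    (yseq phi n x - yseq phi (n + k) x) + (yseq phi (n + k) x - yseq phi (n + k).+1 x)
    by rewrite addrA subrK.
  apply: le_trans (ntri _ _) _; rewrite (nrmB (yseq phi (n + k) x)).
  have := step (n + k) x => H.
  rewrite (_ : eps * q ^+ n * (q * (1 - q ^+ k.+1) / (1 - q)) =
     eps * q ^+ n * (q * (1 - q ^+ k) / (1 - q)) + eps * q ^+ (n + k).+1).
    exact: lerD.
  rewrite !exprS exprD; field; lra.
set K := eps / (P - 1).
have K0 : 0 < K by apply: divr_gt0 => //; lra.
have Kq : eps * (q / (1 - q)) = K by rewrite /K /q; field; lra.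
have bound2 k n x : nrm (yseq phi n x - yseq phi (n + k) x) <= K * q ^+ n.
  apply: le_trans (cum k n x) _.
  have qk0 : 0 <= q ^+ k by rewrite exprn_ge0 // ltW.
  have qn0 : 0 <= q ^+ n by rewrite exprn_ge0 // ltW.
  rewrite -Kq (_ : eps * q ^+ n * (q * (1 - q ^+ k) / (1 - q)) =
      (eps * (q / (1 - q)) * q ^+ n) * (1 - q ^+ k)); last by field; lra.
  apply: ler_piMr; last lra.
  rewrite Kq; apply: mulr_ge0 => //; exact: ltW.
have lim x : exists v, (fun n : nat => nrm (yseq phi n x - v)) @ \oo --> (0 : R).
  apply: hcomp => e e0.
  have := @cvg_expr R q; rewrite ger0_norm ?(ltW q0) // => /(_ q1).
  move/cvgrPdist_lt => /(_ (e / K) (divr_gt0 e0 K0)) [N _ HN].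
  exists N => m n Hm Hn.
  wlog Hnm : m n Hm Hn / (n <= m)%N.
    move=> W; case: (leqP n m) => H; first exact: W.
    rewrite nrmB; apply: W => //; exact: ltnW.
  rewrite nrmB -(subnKC Hnm); apply: le_lt_trans (bound2 _ _ _) _.
  have := HN n Hn; rewrite sub0r normrN ger0_norm ?exprn_ge0 ?(ltW q0) // => H.
  by rewrite mulrC -ltr_pdivlMr.
have [h hh] := choice lim.
have bnd x : nrm (phi x - h x) <= K.
  apply: (lim_le (hh x)) => n /=.
  have -> : phi x - h x = (yseq phi 0 x - yseq phi (0 + n) x) + (yseq phi n x - h x)
    by rewrite add0n addrA subrK.
  apply: le_trans (ntri _ _) _; apply: lerD => //.
  by have := bound2 n 0 x; rewrite expr0 mulr1.
have qd n x y : nrm (Qd (yseq phi n) x y) <= 3 * eps * q ^+ n.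
  elim: n x y => [|n IH] x y.
    rewrite yseq0 expr0 mulr1 (EQid _ _ phi0).
    have H1 := hphi x y 0; have H2 := hphi 0 (x - y) 0; have H3 := hphi 0 y 0.
    apply: le_trans (nrmD _ _) _.
    have := ntri
      (phi (x + y - 0) + phi (x + 0 - y) + phi (y + 0 - x) - phi (x - y) - phi (x - 0)
    - phi (0 - y) - phi x - phi y - phi 0)
      (phi (0 + (x - y) - 0) + phi (0 + 0 - (x - y)) + phi ((x - y) + 0 - 0) - phi (0 - (x - y)) - phi (0 - 0)
    - phi (0 - (x - y)) - phi 0 - phi (x - y) - phi 0).
    lra.
  have -> : Qd (yseq phi n.+1) x y = c *: Qd (yseq phi n) (x + x) (y + y).
    rewrite /Qd !yseqS !scalerBr scalerDr -!scalerMnr (addrACA x y x y).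
    by rewrite (addrACA x (- y) x (- y)) -opprD.
  rewrite hc exprS (_ : 3 * eps * (q * q ^+ n) = q * (3 * eps * q ^+ n)); last by ring.
  by apply: ler_wpM2l; [exact: ltW | exact: IH].
have hq : quadratic h.
  apply/Qd_quad => x y.
  pose a (z : X) (n : nat) := nrm (yseq phi n z - h z).
  have ha z : a z @ \oo --> (0:R) := hh z.
  have Hc : (fun n => a (x + y) n + a (x - y) n + (a x n + a x n) + (a y n + a y n)
       + q ^+ n * (3 * eps)) @ \oo --> (0:R).
    by repeat apply: cvg0D => //; apply: cvg0geo => //; exact: ltW.
  have : nrm (Qd h x y) <= 0.
    apply: (lim_le Hc) => n; rewrite add0r.
    rewrite -[Qd h x y](subrK (Qd (yseq phi n) x y)) -Qd_sub.
    apply: le_trans (ntri _ _) _.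
    apply: lerD; last by rewrite mulrC; apply: qd.
    rewrite /Qd /a.
    set A := h (x + y) - _; set B := h (x - y) - _; set C := h x - _; set D := h y - _.
    have t1 := ntri A B; have t2 := nrmD (A + B) (C *+ 2);
    have t3 := nrmD (A + B - C *+ 2) (D *+ 2); have t4 := nrm2 C; have t5 := nrm2 D.
    rewrite mulr2n in t4 t5.
    rewrite -/A -/B -/C -/D (nrmB _ (h (x + y))) (nrmB _ (h (x - y))) (nrmB _ (h x)) (nrmB _ (h y)).
    lra.
  move=> H; apply/nrm0; apply/eqP; by rewrite eq_le H nrm_ge0.
exists h; split => // h' hq' hb'.
apply: funext => x0.
pose D z := h' z - h z.
have qD z w : Qd D z w = 0.
  rewrite /D Qd_sub.
  by move/Qd_quad: hq' => ->; move/Qd_quad: hq => ->; rewrite subrr.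
have D0 : D 0 = 0.
  have := qD 0 0; rewrite /Qd addr0 subrr -mulr2n subrr sub0r => /eqP.
  rewrite oppr_eq0 => /eqP H.
  by rewrite -(cq (D 0)) (mulrnA (D 0) 2 2) H mul0rn scaler0.
have D2 z : D z = c *: D (z + z).
  have := qD z z; rewrite /Qd subrr D0 addr0 -addrA -opprD => /eqP; rewrite subr_eq0 => /eqP ->.
  by rewrite -mulrnDr cq.
have Db z : nrm (D z) <= K *+ 2.
  have -> : D z = (h' z - phi z) + (phi z - h z) by rewrite /D addrA subrK.
  apply: le_trans (ntri _ _) _; rewrite nrmB mulr2n; apply: lerD => //.
have Dn n z : nrm (D z) <= q ^+ n * (K *+ 2).
  elim: n z => [|n IH] z; first by rewrite expr0 mul1r.
  rewrite D2 hc exprS -mulrA.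
  by apply: ler_wpM2l; [exact: ltW | exact: IH].
have : nrm (D x0) <= 0.
  apply: (lim_le (cvg0geo (K *+ 2) (ltW q0) q1)) => n; rewrite add0r; exact: Dn.
move=> H; apply/eqP; rewrite -subr_eq0; apply/eqP; apply/nrm0.
by apply/eqP; rewrite eq_le H nrm_ge0.
Qed.
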